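(* Let $p>2$, and let $F$, $a$, $K$, $G=\langle\sigma\rangle$, $J$, $J_i$, $N$, $M_\gamma$ be as in the context. Let $\gamma\in K^\times$ with $[\gamma]\neq[1]$, and let $l=\dim_{\mathbb{F}_p}M_\gamma$ (so $[\gamma]\in J_l\setminus J_{l-1}$). (a) If $3\le l\le p$, then there exists $[\alpha]\in J$ such that $\langle N([\alpha])\rangle = M_\gamma^G$. (b) If $l=2$ and $\gamma$ cannot be written as $\gamma=(\sqrt[p]{a})^{r}\gamma_1$ with $r\in\mathbb{Z}$ and $[\gamma_1]\in J_1$, then there exist $t\in\mathbb{Z}$ and $[\alpha]\in J$ such that $\langle N([\alpha])\rangle = \big(M_{(\sqrt[p]{a})^{t}\gamma}\big)^G$.
   Context: Let $p$ be a prime and $F$ a field of characteristic different from $p$ containing a primitive $p$th root of unity $\xi_p$. Let $a\in F^\times\setminus F^{\times p}$, fix a $p$th root $\sqrt[p]{a}$, and let $K=F(\sqrt[p]{a})$; $K^\times=K\setminus\{0\}$. Let $G=\mathrm{Gal}(K/F)=\langle\sigma\rangle$, where $\sigma(\sqrt[p]{a})/\sqrt[p]{a}=\xi_p$. Let $J=K^\times/K^{\times p}$, an $\mathbb{F}_p[G]$-module with elements $[\gamma]$, $\gamma\in K^\times$. Let $N=1+\sigma+\dots+\sigma^{p-1}$, acting on $J$. For $i\ge1$ let $J_i=\ker\big((\sigma-1)^i\colon J\to J\big)$, and $J_0=\{0\}$. For $\gamma\in K^\times$ with $[\gamma]\in J_i\setminus J_{i-1}$, let $\gamma_j=\gamma^{(\sigma-1)^j}$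 and $M_\gamma=\langle[\gamma],[\gamma_1],\dots,[\gamma_{i-1}]\rangle$, the cyclic $\mathbb{F}_p[G]$-submodule of $J$ generated by $[\gamma]$; it has $\mathbb{F}_p$-dimension $i$. $\langle\cdot\rangle$ denotes $\mathbb{F}_p$-span and $V^G$ the $G$-fixed submodule. *)

(* Defs.v *)
From HB Require Import structures.
From mathcomp Require Import all_boot all_order all_algebra all_fingroup all_field.
Set Implicit Arguments. Unset Strict Implicit. Unset Printing Implicit Defensive.
Import GRing.Theory.
Local Open Scope ring_scope.

(* J = K^x / K^{x p}: we work with representatives gamma in K^x (gamma != 0);
   [x] = [y] in J  iff  x = y * z^p for some nonzero z. *)
Section KummerDefs.
Variables (K : fieldType) (p : nat) (sigma : K -> K).

Definition same_cls (x y : K) : Prop := exists2 z : K, z != 0 & x = y * z ^+ p.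

Definition triv_cls (x : K) : Prop := same_cls x 1.

(* action of sigma - 1 on representatives: [x] |-> [sigma x / x] *)
Definition sm1 (x : K) : K := sigma x / x.

Definition gam (j : nat) (x : K) : K := iter j sm1 x.

Definition inJ (i : nat) (x : K) : Prop := triv_cls (gam i x).

(* [x] \in M_gamma, the cyclic F_p[G]-submodule generated by [gamma], i.e. the
   F_p-span of the [gamma_j], j >= 0 *)
Definition inM (gamma x : K) : Prop :=
  exists (n : nat) (c : nat -> nat),
    same_cls x (\prod_(j < n) gam j gamma ^+ c j).

Definition fixedJ (x : K) : Prop := triv_cls (sm1 x).

Definition normJ (alpha : K) : K := \prod_(k < p) iter k sigma alpha.

Definition inSpan (y x : K) : Prop := exists k : nat, same_cls x (y ^+ k).

Definition span_norm_eq_fixedM (alpha gamma : K) : Prop :=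
  forall x : K, x != 0 -> (inSpan (normJ alpha) x <-> (inM gamma x /\ fixedJ x)).

End KummerDefs.

(* Main.v *)
From Pilot Require Import Defs.
From HB Require Import structures.
From mathcomp Require Import all_boot all_order all_algebra all_fingroup all_field.
From mathcomp Require Import ring.
Set Implicit Arguments. Unset Strict Implicit. Unset Printing Implicit Defensive.
Import GRing.Theory.
Local Open Scope ring_scope.
Local Notation normJ := Pilot.Defs.normJ.

Section Cls.
Variables (F : fieldType) (K : fieldExtType F) (p : nat).
Hypothesis pp : prime p.

Lemma triv_clsP (x : K) : triv_cls p x <-> exists2 z : K, z != 0 & x = z ^+ p.
Proof.
by split => -[z nz ->]; exists z => //; rewrite mul1r.
Qed.

Lemma triv_neq0 (x : K) : triv_cls p x -> x != 0.
Proof. by case/triv_clsP => z nz ->; rewrite expf_neq0. Qed.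

Lemma triv1 : triv_cls p (1 : K).
Proof. by apply/triv_clsP; exists 1; rewrite ?oner_neq0 ?expr1n. Qed.

Lemma trivP (z : K) : z != 0 -> triv_cls p (z ^+ p).
Proof. by move=> nz; apply/triv_clsP; exists z. Qed.

Lemma trivM (x y : K) : triv_cls p x -> triv_cls p y -> triv_cls p (x * y).
Proof.
case/triv_clsP => z nz ->; case/triv_clsP => w nw ->.
by apply/triv_clsP; exists (z * w); rewrite ?mulf_neq0 ?exprMn.
Qed.

Lemma trivV (x : K) : triv_cls p x -> triv_cls p x^-1.
Proof.
case/triv_clsP => z nz ->.
by apply/triv_clsP; exists z^-1; rewrite ?invr_eq0 ?exprVn.
Qed.

Lemma trivX (x : K) n : triv_cls p x -> triv_cls p (x ^+ n).
Proof.
move=> tx; elim: n => [|n IH]; first by rewrite expr0; apply: triv1.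
by rewrite exprS; apply: trivM.
Qed.

Lemma triv_prod (I : Type) (r : seq I) (P : pred I) (f : I -> K) :
  (forall i, P i -> triv_cls p (f i)) -> triv_cls p (\prod_(i <- r | P i) f i).
Proof.
by move=> H; apply: big_ind => //; [exact: triv1 | exact: trivM].
Qed.

Lemma triv_div (x : K) k : x != 0 -> (p %| k)%N -> triv_cls p (x ^+ k).
Proof.
move=> nx /dvdnP [q ->]; rewrite exprM; apply: trivP; exact: expf_neq0.
Qed.

Lemma triv_coprime (x : K) k : x != 0 -> ~~ (p %| k)%N -> triv_cls p (x ^+ k) ->
  triv_cls p x.
Proof.
move=> nx ndk tk.
have p0 : (0 < p)%N by rewrite prime_gt0.
have cp : coprime p k by rewrite prime_coprime.
case: (egcdnP k p0) => km kn E _.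
move: E; rewrite (eqP cp) => E.
have -> : x = (x ^+ km) ^+ p / (x ^+ k) ^+ kn.
  rewrite -!exprM E exprD expr1 (mulnC k) mulrAC mulfV ?mul1r //.
  by rewrite expf_neq0.
by apply: trivM; [apply: trivP; rewrite expf_neq0 | apply/trivV/trivX].
Qed.

Lemma same_of_triv (x y t : K) : triv_cls p t -> x = y * t -> same_cls p x y.
Proof. move=> /triv_clsP [z nz] tz xe. rewrite xe tz. by exists z. Qed.

Lemma same_triv (x y : K) : same_cls p x y -> exists2 t, triv_cls p t & x = y * t.
Proof. case=> z nz ->; exists (z ^+ p) => //; exact: trivP. Qed.

End Cls.
Section Mult.
Variables (F : fieldType) (K : fieldExtType F) (p : nat) (m : K -> K).
Hypotheses (mM : forall x y, m (x * y) = m x * m y) (m1 : m 1 = 1)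
  (m_eq0 : forall x, (m x == 0) = (x == 0)).

Lemma mX x n : m (x ^+ n) = m x ^+ n.
Proof. by elim: n => [|n IH]; rewrite ?expr0 ?m1 // !exprS mM IH. Qed.

Lemma mV x : m x^-1 = (m x)^-1.
Proof.
have [->|nx] := eqVneq x 0.
  by rewrite invr0; have := m_eq0 0; rewrite eqxx => /eqP ->; rewrite invr0.
have nmx : m x != 0 by rewrite m_eq0.
apply: (mulfI nmx); rewrite -mM mulfV // mulfV //.
Qed.

Lemma m_prod (I : Type) (r : seq I) (P : pred I) (f : I -> K) :
  m (\prod_(i <- r | P i) f i) = \prod_(i <- r | P i) m (f i).
Proof. exact: (big_morph m mM m1). Qed.

Lemma m_triv x : triv_cls p x -> triv_cls p (m x).
Proof.
case/triv_clsP => z nz ->; rewrite mX; apply: trivP; by rewrite m_eq0.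
Qed.

Lemma m_same x y : same_cls p x y -> same_cls p (m x) (m y).
Proof. by case=> z nz ->; exists (m z); rewrite ?m_eq0 // mM mX. Qed.

End Mult.

Lemma iter_mult (F : fieldType) (K : fieldExtType F) (m : K -> K) :
  (forall x y, m (x * y) = m x * m y) -> m 1 = 1 ->
  (forall x, (m x == 0) = (x == 0)) ->
  forall n, [/\ (forall x y, iter n m (x * y) = iter n m x * iter n m y),
     iter n m 1 = 1 & (forall x, (iter n m x == 0) = (x == 0))].
Proof.
move=> mM m1 m0; elim=> [|n [IM I1 I0]] //=.
by split => [x y|| x]; rewrite ?IM ?mM ?I1 ?m1 ?m0 ?I0.
Qed.
Section Sig.
Variables (F : fieldType) (K : fieldExtType F) (p : nat) (s : K -> K).
Hypothesis pp : prime p.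
Hypotheses (sD : forall x y, s (x + y) = s x + s y)
  (sZ : forall (k : F) x, s (k *: x) = k *: s x)
  (sM : forall x y, s (x * y) = s x * s y) (s1 : s 1 = 1).

Lemma s0 : s 0 = 0.
Proof. by have := sZ 0 0; rewrite !scale0r. Qed.

Lemma s_eq0 x : (s x == 0) = (x == 0).
Proof.
have [->|nx] := eqVneq x 0; first by rewrite s0 eqxx.
apply/negbTE; apply/eqP => h.
have := sM x x^-1; rewrite mulfV // s1 h mul0r => /eqP; by rewrite oner_eq0.
Qed.

Lemma sm1M x y : sm1 s (x * y) = sm1 s x * sm1 s y.
Proof. by rewrite /sm1 sM invfM mulrACA. Qed.

Lemma sm1_1 : sm1 s 1 = 1.
Proof. by rewrite /sm1 s1 invr1 mulr1. Qed.

Lemma sm1_eq0 x : (sm1 s x == 0) = (x == 0).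
Proof. by rewrite /sm1 mulf_eq0 invr_eq0 s_eq0 orbb. Qed.

Definition gamH := iter_mult sm1M sm1_1 sm1_eq0.

Lemma gamM n x y : gam s n (x * y) = gam s n x * gam s n y.
Proof. by case: (gamH n) => H _ _; apply: H. Qed.

Lemma fixed_part (g0 : K) l : g0 != 0 -> (0 < l)%N ->
  inJ p s l g0 -> ~ inJ p s l.-1 g0 ->
  forall x, x != 0 ->
  ((exists k, same_cls p x (gam s l.-1 g0 ^+ k)) <-> (inM p s g0 x /\ fixedJ p s x)).
Proof.
move=> ng0 l0 hl hnl x nx.
pose g j := gam s j g0.
have G0 : forall j, g j != 0 by move=> j; case: (gamH j) => _ _ ->.
have gD : forall d j, gam s d (g j) = g (d + j) by move=> d j; rewrite /g /gam iterD.
have GT : forall i, (l <= i)%N -> triv_cls p (g i).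
  move=> i li; rewrite -(subnK li) -gD.
  by case: (gamH (i - l)) => H1 H2 H3; apply: (m_triv H1 H2 H3).
have gS : sm1 s (g l.-1) = g l by rewrite /g /gam -iterS prednK.
split.
  case=> k hk; split.
    exists l, (fun j => if j == l.-1 then k else 0%N).
    have ltl : (l.-1 < l)%N by rewrite prednK.
    rewrite (bigD1 (Ordinal ltl)) //= eqxx big1 ?mulr1 //.
    move=> j hj; case: eqP => e; last by rewrite expr0.
    by case/eqP: hj; exact: (@ord_inj l j (Ordinal ltl) e).
  have := m_same sm1M sm1_1 sm1_eq0 hk; rewrite (mX sm1M sm1_1) gS.
  rewrite /fixedJ; case/same_triv => t tt ->; apply: trivM => //; apply: trivX; exact: hl.
case=> -[n [c hc]] fx.
pose Q d := \prod_(j < n) g (d + j)%N ^+ c j.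
have F1 : forall d, (0 < d)%N -> triv_cls p (Q d).
  move=> d d0; case: (gamH d) => H1 H2 H3.
  have := m_same H1 H2 H3 hc; rewrite (m_prod H1 H2).
  have -> : \prod_(i < n) gam s d (gam s i g0 ^+ c i) = Q d.
    apply: eq_bigr => j _; move: (mX H1 H2 (gam s j g0) (c j)).
    by rewrite /g /gam iterD => ->.
  case/same_triv => t tt et.
  have tg : triv_cls p (gam s d x).
    rewrite -(prednK d0) /gam iterSr.
    by case: (gamH d.-1) => I1 I2 I3; apply: (m_triv I1 I2 I3); exact: fx.
  have -> : Q d = gam s d x / t.
    by rewrite /gam et mulfK // (triv_neq0 tt).
  by apply: trivM => //; apply: trivV.
have split d m0 (hm0 : (m0 < n)%N) : (forall j, (j < m0)%N -> (p %| c j)%N) ->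
    (d + m0)%N = l.-1 -> exists2 R, triv_cls p R & Q d = g l.-1 ^+ c m0 * R.
  move=> hj hd; exists (\prod_(j < n | j != Ordinal hm0) g (d + j)%N ^+ c j).
    apply: triv_prod => j /= hj0.
    have [jm|mj] := ltnP j m0; first by apply: triv_div => //; apply: hj.
    apply: trivX; apply: GT.
    have mj' : (m0 < j)%N.
      rewrite ltn_neqAle mj andbT; apply/eqP => e; move/eqP: hj0; apply.
      exact: (@ord_inj n j (Ordinal hm0) (esym e)).
    by rewrite -(prednK l0) -hd ltn_add2l.
  by rewrite /Q (bigD1 (Ordinal hm0)) //= hd.
have F2 : forall m0, (m0 < l.-1)%N -> (m0 < n)%N -> (p %| c m0)%N.
  elim/ltn_ind => m0 IH hml hmn.
  case: (boolP (p %| c m0)%N) => // ndvd; exfalso; apply: hnl.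
  apply: (triv_coprime pp (G0 _) ndvd).
  have [R tR eQ] := split (l.-1 - m0)%N m0 hmn
     (fun j hj => IH j hj (ltn_trans hj hml) (ltn_trans hj hmn)) (subnK (ltnW hml)).
  have -> : g l.-1 ^+ c m0 = Q (l.-1 - m0)%N / R by rewrite eQ mulfK // (triv_neq0 tR).
  by apply: trivM; [apply: F1; rewrite subn_gt0 | apply: trivV].
have [t tt et] := same_triv hc.
have Q0 : \prod_(j < n) gam s j g0 ^+ c j = Q 0%N by [].
case: (ltnP l.-1 n) => hn.
  exists (c l.-1).
  have [R tR eQ] := split 0%N l.-1 hn (fun j hj => F2 j hj (ltn_trans hj hn)) (add0n _).
  by apply: (same_of_triv (t := R * t)); [apply: trivM | rewrite et Q0 eQ mulrA].
exists 0%N; apply: (same_of_triv (t := Q 0%N * t)); last by rewrite et Q0 expr0 mul1r.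
apply: trivM => //; apply: triv_prod => j _.
apply: triv_div => //; apply: F2 => //; exact: leq_trans (ltn_ord j) hn.
Qed.

Variables (xiK rt : K).
Hypotheses (podd : odd p) (xprim : p.-primitive_root xiK) (sxi : s xiK = xiK)
  (srt : s rt = xiK * rt) (rt0 : rt != 0) (pK : (p%:R : K) != 0)
  (Sp : forall y, iter p s y = y).

Definition SH := iter_mult sM s1 s_eq0.

Lemma SM n x y : iter n s (x * y) = iter n s x * iter n s y.
Proof. by case: (SH n) => H _ _; apply: H. Qed.
Lemma S1 n : iter n s 1 = 1.
Proof. by case: (SH n). Qed.
Lemma S_eq0 n x : (iter n s x == 0) = (x == 0).
Proof. by case: (SH n) => _ _ H; apply: H. Qed.
Lemma SX n x k : iter n s (x ^+ k) = iter n s x ^+ k.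
Proof. exact: (mX (SM n) (S1 n)). Qed.
Lemma SV n x : iter n s x^-1 = (iter n s x)^-1.
Proof. exact: (mV (SM n) (S1 n) (S_eq0 n)). Qed.
Lemma sX x k : s (x ^+ k) = s x ^+ k.
Proof. exact: (mX sM s1). Qed.
Lemma sV x : s x^-1 = (s x)^-1.
Proof. exact: (mV sM s1 s_eq0). Qed.
Lemma s_prod (I : Type) (r : seq I) (P : pred I) (f : I -> K) :
  s (\prod_(i <- r | P i) f i) = \prod_(i <- r | P i) s (f i).
Proof. exact: (m_prod sM s1). Qed.
Lemma s_sum (I : Type) (r : seq I) (P : pred I) (f : I -> K) :
  s (\sum_(i <- r | P i) f i) = \sum_(i <- r | P i) s (f i).
Proof. exact: (big_morph s sD s0). Qed.

Lemma sm1_fix (f : K) : f != 0 -> s f = f -> sm1 s f = 1.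
Proof. by move=> nf sf; rewrite /sm1 sf mulfV. Qed.

Lemma tele (y : K) : y != 0 -> normJ p s (sm1 s y) = 1.
Proof.
move=> ny; rewrite /normJ.
suff H : forall n, \prod_(k < n) iter k s (sm1 s y) = iter n s y / y.
  by rewrite H Sp mulfV.
elim=> [|n IH]; first by rewrite big_ord0 /= mulfV.
rewrite big_ord_recr /= IH /sm1 SM SV -iterSr /=.
by rewrite mulrC -mulrA mulKf // S_eq0.
Qed.

Lemma mu_fix (y : K) : y ^+ p = 1 -> s y = y.
Proof. by case/(prim_rootP xprim) => i ->; rewrite sX sxi. Qed.

Definition Dp (c : K) k := \prod_(m < k) iter m s c.

Lemma DpS c k : Dp c k.+1 = c * s (Dp c k).
Proof. by rewrite /Dp big_ord_recl s_prod. Qed.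

Lemma half_sum : (\sum_(k < p) k = p * (p.-1)./2)%N.
Proof.
rewrite -(big_mkord xpredT (fun k => k)) bin2_sum bin2.
have ev : ~~ odd p.-1.
  by move: podd; rewrite -{1}(prednK (prime_gt0 pp)) /=.
by rewrite -{1}[p.-1](odd_double_half) (negbTE ev) add0n -doubleMr doubleK.
Qed.

Lemma keyP (y f c : K) : y != 0 -> c != 0 -> s f = f -> s y = y * f * c ^+ p ->
  exists P, P ^+ p = normJ p s y /\ s P = P * (f * normJ p s c).
Proof.
move=> ny nc sf sy.
pose P := y * f ^+ (p.-1)./2 * \prod_(k < p) Dp c k; exists P.
have Sk : forall k, iter k s y = y * f ^+ k * Dp c k ^+ p.
  elim=> [|k IH]; first by rewrite /Dp big_ord0 expr1n !mulr1.
  rewrite iterS IH !sM !sX sf sy DpS exprS exprMn.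
  by ring.
split.
  rewrite /normJ (eq_bigr (fun k : 'I_p => y * f ^+ k * Dp c k ^+ p)); last first.
    by move=> k _; apply: Sk.
  rewrite !big_split /= prodr_const card_ord.
  rewrite prodrXr prodrXl half_sum !exprMn -exprM mulnC exprM.
  done.
have Dl : \prod_(k < p) s (Dp c k) * c ^+ p = \prod_(k < p) Dp c k * normJ p s c.
  have -> : c ^+ p = \prod_(k < p) c by rewrite prodr_const card_ord.
  rewrite -big_split /= (eq_bigr (fun k : 'I_p => Dp c k.+1)); last first.
    by move=> k _; rewrite DpS mulrC.
  have e1 : \prod_(k < p.+1) Dp c k = Dp c 0 * \prod_(k < p) Dp c k.+1.
    by rewrite big_ord_recl.
  have e : \prod_(k < p.+1) Dp c k = (\prod_(k < p) Dp c k) * Dp c p.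
    by rewrite big_ord_recr.
  rewrite e1 in e.
  have D0 : Dp c 0 = 1 by rewrite /Dp big_ord0.
  by rewrite D0 mul1r in e; rewrite -e.
have ncp : c ^+ p != 0 by rewrite expf_neq0.
rewrite /P !sM sX sf s_prod sy.
have -> : \prod_(i < p) s (Dp c i) = \prod_(k < p) Dp c k * normJ p s c / c ^+ p.
  by rewrite -Dl mulfK.
rewrite /P; field; exact: ncp.
Qed.

Lemma key (y f c : K) : y != 0 -> c != 0 -> s f = f -> s y = y * f * c ^+ p ->
  normJ p s y = 1 -> f * normJ p s c = 1.
Proof.
move=> ny nc sf sy N1; have [P [PP sP]] := keyP ny nc sf sy.
have P1 : P ^+ p = 1 by rewrite PP.
have nP : P != 0.
  by apply/eqP => P0; move: P1; rewrite P0 expr0n gtn_eqF ?prime_gt0 // => /eqP; rewrite eq_sym oner_eq0.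
by apply: (mulfI nP); rewrite -sP mulr1 mu_fix.
Qed.

Lemma s_eq0' (x : K) : x != 0 -> s x != 0.
Proof. by rewrite s_eq0. Qed.

Lemma S_rt n : iter n s rt = xiK ^+ n * rt.
Proof.
elim: n => [|n IH]; first by rewrite expr0 mul1r.
by rewrite iterS IH sM sX sxi srt exprS; ring.
Qed.

Lemma geo i : (i < p)%N -> \sum_(m < p) (xiK ^+ i) ^+ m = if i == 0%N then p%:R else 0.
Proof.
move=> ip; case: eqP => [->|i0].
  by rewrite (eq_bigr (fun _ => 1)) ?sumr_const ?card_ord // => m _; rewrite expr1n.
have h : (xiK ^+ i) ^+ p - 1 = 0 by rewrite -exprM mulnC exprM (prim_expr_order xprim) expr1n subrr.
rewrite subrX1 in h; move/eqP: h; rewrite mulf_eq0 => /orP [|/eqP //].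
rewrite subr_eq0 => /eqP h; exfalso; apply: i0.
have := (eq_prim_root_expr xprim i 0); rewrite h expr0 eqxx => /esym.
by rewrite modn_small // mod0n => /eqP.
Qed.

Lemma hilbert90 (z : K) : z != 0 -> normJ p s z = 1 ->
  exists2 c, c != 0 & s c = z * c.
Proof.
move=> nz N1.
pose C i := \prod_(k < i) iter k s z.
pose Th th := \sum_(i < p) C i * iter i s th.
have CS i : C i.+1 = z * s (C i) by rewrite /C big_ord_recl s_prod.
have C0 : C 0%N = 1 by rewrite /C big_ord0.
have Cp : C p = 1 by [].
have ThE th : z * s (Th th) = Th th.
  rewrite /Th s_sum mulr_sumr.
  pose G i := C i * iter i s th.
  have e1 : \sum_(i < p.+1) G i = G 0%N + \sum_(i < p) G i.+1 by rewrite big_ord_recl.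
  have e2 : \sum_(i < p.+1) G i = \sum_(i < p) G i + G p by rewrite big_ord_recr.
  have Gp : G p = G 0%N by rewrite /G Cp C0 Sp.
  have : \sum_(i < p) G i.+1 = \sum_(i < p) G i.
    by apply: (addrI (G 0%N)); rewrite -e1 e2 Gp addrC.
  rewrite /G => <-; apply: eq_bigr => i _.
  by rewrite sM CS iterS mulrA.
have [m hm] : exists m : 'I_p, Th (rt ^+ m) != 0.
  case: (boolP [exists m : 'I_p, Th (rt ^+ m) != 0]) => [/existsP //| /existsPn H].
  exfalso; move/eqP: pK; apply.
  have : \sum_(m < p) Th (rt ^+ m) * (rt ^+ m)^-1 = 0.
    by apply: big1 => m _; move: (H m); rewrite negbK => /eqP ->; rewrite mul0r.
  rewrite /Th (eq_bigr (fun m : 'I_p => \sum_(i < p) C i * (xiK ^+ i) ^+ m)); last first.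
    move=> m _; rewrite mulr_suml; apply: eq_bigr => i _.
    rewrite SX S_rt exprMn -mulrA mulfK //.
    by rewrite expf_neq0.
  rewrite exchange_big /= (eq_bigr (fun i : 'I_p => C i * if (i == 0%N :> nat) then p%:R else 0)).
    rewrite (bigD1 (Ordinal (prime_gt0 pp))) //= C0 mul1r big1 ?addr0 // => i hi.
    case: eqP => e; last by rewrite mulr0.
    by case/eqP: hi; apply: (@ord_inj p i (Ordinal (prime_gt0 pp))).
  by move=> i _; rewrite -mulr_sumr geo.
exists (Th (rt ^+ m))^-1; first by rewrite invr_eq0.
by rewrite sV -{2}(ThE (rt ^+ m)) invfM mulrA mulfV // mul1r.
Qed.

Lemma normV (c : K) : normJ p s c^-1 = (normJ p s c)^-1.
Proof. by rewrite /normJ -prodfV; apply: eq_bigr => k _; rewrite SV. Qed.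

Lemma sm1_neq0 (x : K) : x != 0 -> sm1 s x != 0.
Proof. by rewrite sm1_eq0. Qed.

Lemma norm_neq0 (x : K) : x != 0 -> normJ p s x != 0.
Proof. by move=> nx; rewrite /normJ prodf_seq_neq0; apply/allP => k _; rewrite S_eq0. Qed.

Lemma prep (u : K) : u != 0 -> triv_cls p (sm1 s (sm1 s u)) ->
  exists c f, [/\ c != 0, s f = f, sm1 s u = f * c ^+ p & s u = u * f * c ^+ p].
Proof.
move=> nu /triv_clsP [z nz ez].
set x := sm1 s u in ez *.
have nx : x != 0 by rewrite sm1_neq0.
have Nx : normJ p s x = 1 by apply: tele.
have sx : s x = x * 1 * z ^+ p by rewrite mulr1 -ez /sm1 mulrC divfK.
have := key nx nz s1 sx Nx; rewrite mul1r => Nz.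
have [c nc sc] := hilbert90 nz Nz.
have ncp : c ^+ p != 0 by rewrite expf_neq0.
exists c, (x / c ^+ p); split => //.
- by rewrite sM sV sX sx sc exprMn mulr1 invfM mulrA mulfK // expf_neq0.
- by rewrite divfK.
- by rewrite -mulrA divfK // /x /sm1 mulrC divfK.
Qed.

Lemma core_a (u : K) : u != 0 -> triv_cls p (sm1 s (sm1 s u)) -> normJ p s u = 1 ->
  exists2 a, a != 0 & same_cls p (sm1 s u) (normJ p s a).
Proof.
move=> nu tu Nu; have [c [f [nc sf ex su]]] := prep nu tu.
have hf := key nu nc sf su Nu.
exists c^-1; first by rewrite invr_eq0.
exists c => //; rewrite ex normV.
have nN : normJ p s c != 0 by rewrite norm_neq0.
congr (_ * _); apply: (mulIf nN); by rewrite hf mulVf.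
Qed.

Lemma sN (g : K) : g != 0 -> s (normJ p s g) = normJ p s g.
Proof.
move=> ng.
have e : s (normJ p s g) = normJ p s g * normJ p s (sm1 s g).
  rewrite /normJ s_prod -big_split /=; apply: eq_bigr => k _.
  by rewrite /sm1 SM SV -iterSr iterS mulrC divfK // S_eq0.
by rewrite e tele // mulr1.
Qed.

Lemma core_b (g : K) : g != 0 -> triv_cls p (sm1 s (sm1 s g)) ->
  exists n, exists2 a, a != 0 & same_cls p (xiK ^+ n * sm1 s g) (normJ p s a).
Proof.
move=> ng tg; have [c [f [nc sf ex sg]]] := prep ng tg.
have [P [PP sP]] := keyP ng nc sf sg.
have nP : P != 0.
  apply/eqP => P0; move: (norm_neq0 ng); rewrite -PP P0 expr0n.
  by rewrite (gtn_eqF (prime_gt0 pp)) eqxx.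
have h1 : (f * normJ p s c) ^+ p = 1.
  have : s (P ^+ p) = P ^+ p by rewrite PP sN.
  rewrite sX sP exprMn => /eqP; rewrite -subr_eq0 -{2}[P ^+ p]mulr1 -mulrBr mulf_eq0.
  by rewrite expf_eq0 (negbTE nP) andbF /= subr_eq0 => /eqP.
have [j ej] := prim_rootP xprim h1.
exists (p - j)%N, c^-1; first by rewrite invr_eq0.
exists c => //; rewrite ex normV mulrA.
have nN : normJ p s c != 0 by rewrite norm_neq0.
congr (_ * _); apply: (mulIf nN); rewrite mulVf // -mulrA ej -exprD subnK.
  exact: prim_expr_order xprim.
exact: ltnW (ltn_ord j).
Qed.
End Sig.

Lemma same_pow_swap (F : fieldType) (K : fieldExtType F) (p : nat) (a b x : K) k :
  same_cls p a b -> (same_cls p x (a ^+ k) <-> same_cls p x (b ^+ k)).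
Proof.
case=> z nz ->; split; case=> w nw ->.
  exists (z ^+ k * w); first by rewrite mulf_neq0 ?expf_neq0.
  by rewrite !exprMn -mulrA exprAC.
exists (w / z ^+ k); first by rewrite mulf_neq0 ?invr_eq0 ?expf_neq0.
have eM : forall u v : K, u ^+ p * v ^+ p = (u * v) ^+ p by move=> u v; rewrite exprMn.
rewrite exprMn -mulrA; congr (_ * _).
by rewrite -exprM mulnC exprM eM mulrC divfK // expf_neq0.
Qed.

Unset Implicit Arguments.

Theorem lemma1 (F : fieldType) (K : fieldExtType F) (p : nat)
  (xi : F) (a : F) (rt : K) (sigma : 'End(K)) (gamma : K) (l : nat) :
  prime p -> (2 < p)%N ->
  (p%:R : F) != 0 ->
  p.-primitive_root xi ->
  a != 0 -> ~ (exists b : F, a = b ^+ p) ->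
  rt ^+ p = a%:A ->
  <<1; rt>>%VS = fullv ->
  kHom 1%VS fullv sigma ->
  sigma rt = xi *: rt ->
  gamma != 0 ->
  ~ triv_cls p gamma ->
  inJ p (fun x => sigma x) l gamma -> ~ inJ p (fun x => sigma x) l.-1 gamma ->
  ((3 <= l <= p)%N ->
     exists2 alpha : K, alpha != 0 &
       span_norm_eq_fixedM p (fun x => sigma x) alpha gamma)
  /\
  (l = 2%N ->
   ~ (exists (r : int) (g1 : K), [/\ g1 != 0, gamma = rt ^ r * g1
                                     & inJ p (fun x => sigma x) 1 g1]) ->
   exists (t : int) (alpha : K), alpha != 0 /\
     span_norm_eq_fixedM p (fun x => sigma x) alpha (rt ^ t * gamma)).
Proof.
move=> pp p2 pF xprim a0 na rtp gen hK srt0 g0 ntg hl hnl.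
have [fix1 sMin] := kHomP_tmp hK.
set s := (fun x => sigma x) in hl hnl *.
have sD : forall x y, s (x + y) = s x + s y by move=> x y; rewrite /s linearD.
have sZ : forall (k : F) x, s (k *: x) = k *: s x by move=> k x; rewrite /s linearZ.
have sM : forall x y, s (x * y) = s x * s y by move=> x y; apply: sMin; rewrite memvf.
have s1 : s 1 = 1 by rewrite /s fix1 // mem1v.
pose xiK : K := xi%:A.
have xprimK : p.-primitive_root xiK.
  by have : p.-primitive_root (GRing.in_alg K xi) by rewrite fmorph_primitive_root.
have sxi : s xiK = xiK by rewrite /xiK sZ s1.
have srt : s rt = xiK * rt by rewrite /xiK mulr_algl.
have rt0 : rt != 0.
  apply/eqP => r0; move: rtp; rewrite r0 expr0n (gtn_eqF (prime_gt0 pp)) => /esym/eqP.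
  by rewrite scaler_eq0 oner_eq0 orbF (negbTE a0).
have pK : (p%:R : K) != 0.
  by rewrite -(rmorph_nat (GRing.in_alg K)) fmorph_eq0.
have podd : odd p.
  by case: (even_prime pp) => // p2e; rewrite p2e in p2.
have fixS : forall n y, y \in 1%VS -> iter n s y = y.
  by move=> n y y1; elim: n => //= n ->; rewrite /s fix1.
have Ssum : forall n (I : Type) (r : seq I) (P : pred I) (f : I -> K),
    iter n s (\sum_(i <- r | P i) f i) = \sum_(i <- r | P i) iter n s (f i).
  move=> n I r P f; elim: n => //= n ->; exact: (s_sum sD sZ).
have Sp : forall y, iter p s y = y.
  move=> y; have : y \in <<1; rt>>%VS by rewrite gen memvf.
  case/Fadjoin_polyP => q /polyOverP qo ->; rewrite horner_coef Ssum.
  apply: eq_bigr => i _; rewrite (SM sZ sM s1) (SX sZ sM s1) fixS //.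
  by rewrite (S_rt sM s1 sxi srt) (prim_expr_order xprimK) mul1r.
split.
  case/andP => l3 lp.
  pose m := (l - 3)%N.
  have lm : l = m.+3 by rewrite /m -addn3 subnK.
  pose v := gam s m gamma.
  have nv : v != 0 by case: (gamH sZ sM s1 m) => _ _ ->.
  pose u := sm1 s v.
  have nu : u != 0 by rewrite /u (sm1_eq0 sZ sM s1).
  have tu : triv_cls p (sm1 s (sm1 s u)) by move: hl; rewrite /inJ lm.
  have Nu : normJ p s u = 1 by apply: (tele sZ sM s1 Sp).
  have [al nal hal] := core_a pp sD sZ sM s1 podd xprimK sxi srt rt0 pK Sp nu tu Nu.
  exists al => // x nx.
  rewrite -(fixed_part pp sZ sM s1 g0 _ hl hnl nx); last by rewrite lm.
  have e : sm1 s u = gam s l.-1 gamma by rewrite lm.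
  rewrite e in hal.
  split; case=> k hk; exists k.
    exact: (proj2 (same_pow_swap x k hal) hk).
  exact: (proj1 (same_pow_swap x k hal) hk).
move=> l2 nf.
have tg : triv_cls p (sm1 s (sm1 s gamma)) by move: hl; rewrite /inJ l2.
have [n [al nal hal]] := core_b pp sD sZ sM s1 podd xprimK sxi srt rt0 pK Sp g0 tg.
exists (n%:Z), al; split => //.
change (rt ^ n%:Z) with (rt ^+ n).
have nrn : rt ^+ n != 0 by rewrite expf_neq0.
have ng' : rt ^+ n * gamma != 0 by rewrite mulf_neq0.
have smr : sm1 s rt = xiK by rewrite /sm1 srt mulfK.
have e1 : sm1 s (rt ^+ n * gamma) = xiK ^+ n * sm1 s gamma.
  by rewrite (sm1M sM) (mX (sm1M sM) (sm1_1 s1)) smr.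
have sxn : s (xiK ^+ n) = xiK ^+ n by rewrite (sX sM s1) sxi.
have nxn : xiK ^+ n != 0.
  rewrite expf_neq0 //; apply/eqP => x0.
  move: (prim_expr_order xprimK); rewrite x0 expr0n (gtn_eqF (prime_gt0 pp)) => /eqP.
  by rewrite eq_sym oner_eq0.
have hl' : inJ p s 2 (rt ^+ n * gamma).
  rewrite /inJ /gam /= e1 (sm1M sM) (sm1_fix nxn sxn) mul1r.
  by move: hl; rewrite /inJ l2.
have hnl' : ~ inJ p s 2.-1 (rt ^+ n * gamma).
  move=> h; apply: nf; exists (- n%:Z), (rt ^+ n * gamma); split => //.
  by rewrite -invr_expz; change (rt ^ n%:Z) with (rt ^+ n); rewrite mulKf.
move=> x nx.
rewrite -(fixed_part pp sZ sM s1 ng' _ hl' hnl' nx) //.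
have e : gam s 2.-1 (rt ^+ n * gamma) = xiK ^+ n * sm1 s gamma by rewrite -e1.
rewrite -e in hal.
split; case=> k hk; exists k.
  exact: (proj2 (same_pow_swap x k hal) hk).
exact: (proj1 (same_pow_swap x k hal) hk).
Qed.
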